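(* Let $(M,g)$ be a 4-dimensional Lorentzian manifold with Levi-Civita connection $\nabla$, and let $K_{kl}$ be a symmetric tensor with trace $K=K^p{}_p$ satisfying $$\nabla_jK_{kl}=\frac{5}{18}\nabla_jK\,g_{kl}-\frac1{18}\nabla_kK\,g_{jl}-\frac1{18}\nabla_lK\,g_{jk}.$$ Then (i) $\nabla^kK_{kl}=0$ and $K$ is a conformal Killing tensor in the sense $\nabla_jK_{kl}+\nabla_lK_{jk}+\nabla_kK_{lj}=\frac16(\nabla_jK\,g_{kl}+\nabla_lK\,g_{jk}+\nabla_kK\,g_{lj})$; (ii) $\mathscr C_{kl}=K_{kl}-\frac K3g_{kl}$ is a Codazzi tensor ($\nabla_j\mathscr C_{kl}=\nabla_k\mathscr C_{jl}$) and $K_{kl}=\mathscr C_{kl}-g_{kl}\mathscr C^p{}_p$. Consequently, if $T_{kl}$ is such that $R_{kl}-\frac12Rg_{kl}=T_{kl}+K_{kl}$, then $(g,T)$ is simultaneously a solution of conformal Killing gravity (Einstein equations sourced by $T$ plus a divergence-free conformal Killing tensor) and of Cotton gravity in Codazzi form ($R_{kl}-\frac12Rg_{kl}=T_{kl}+\mathscr C_{kl}-g_{kl}\mathscr C^p{}_p$ with $\mathscr C$ Codazzi).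
   Context: $R_{kl}$ and $R$ denote the Ricci tensor and scalar curvature of $g$. *)

(* Defs.v *)
(* local coordinate model of a 4-dimensional
   Lorentzian manifold on an open set U of R^4 = 'rV[R]_4. *)
From HB Require Import structures.
From mathcomp Require Import all_boot all_order all_algebra.
From mathcomp Require Import all_classical all_reals all_analysis.
Set Implicit Arguments. Unset Strict Implicit. Unset Printing Implicit Defensive.
Import Order.TTheory GRing.Theory Num.Theory.
Import numFieldNormedType.Exports.
Local Open Scope ring_scope.

Section Geom.
Variable R : realType.
Notation V := 'rV[R]_4.

Definition ebas (i : 'I_4) : V := delta_mx 0 i.

Definition pd (i : 'I_4) (f : V -> R) (x : V) : R := 'D_(ebas i) f x.

Definition ginv (g : V -> 'M[R]_4) (x : V) : 'M[R]_4 := invmx (g x).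

Definition christoffel (g : V -> 'M[R]_4) (x : V) (i j k : 'I_4) : R :=
  2^-1 * \sum_(l < 4) ginv g x i l *
    (pd j (fun y => g y l k) x + pd k (fun y => g y l j) x
     - pd l (fun y => g y j k) x).

Definition nabla2 (g : V -> 'M[R]_4) (K : V -> 'M[R]_4) (x : V)
  (j k l : 'I_4) : R :=
  pd j (fun y => K y k l) x
  - \sum_(p < 4) christoffel g x p j k * K x p l
  - \sum_(p < 4) christoffel g x p j l * K x k p.

Definition gtrace (g : V -> 'M[R]_4) (K : V -> 'M[R]_4) (x : V) : R :=
  \sum_(p < 4) \sum_(q < 4) ginv g x p q * K x p q.

Definition gdiv (g : V -> 'M[R]_4) (K : V -> 'M[R]_4) (x : V) (l : 'I_4) : R :=
  \sum_(j < 4) \sum_(k < 4) ginv g x j k * nabla2 g K x j k l.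

(* Ricci tensor R_{bd} = R^a_{bad}, with
   R^a_{bcd} = d_c Gamma^a_{db} - d_d Gamma^a_{cb}
               + Gamma^a_{ce} Gamma^e_{db} - Gamma^a_{de} Gamma^e_{cb} *)
Definition ricci (g : V -> 'M[R]_4) (x : V) : 'M[R]_4 :=
  \matrix_(b < 4, d < 4) \sum_(a < 4)
    (pd a (fun y => christoffel g y a d b) x
     - pd d (fun y => christoffel g y a a b) x
     + \sum_(e < 4) (christoffel g x a a e * christoffel g x e d b
                     - christoffel g x a d e * christoffel g x e a b)).

Definition scal_curv (g : V -> 'M[R]_4) (x : V) : R := gtrace g (ricci g) x.

Definition einstein (g : V -> 'M[R]_4) (x : V) : 'M[R]_4 :=
  ricci g x - (scal_curv g x / 2) *: g x.

Definition lorentzian_at (G : 'M[R]_4) : Prop :=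
  G^T = G /\
  exists P : 'M[R]_4, P \in unitmx /\
    P^T *m G *m P = diag_mx (\row_(i < 4) (if i == 0 :> nat then -1 else 1)).

End Geom.

(* Main.v *)
Require Import Defs.
From HB Require Import structures.
From mathcomp Require Import all_boot all_order all_algebra.
From mathcomp Require Import all_classical all_reals all_analysis.
From mathcomp Require Import ring lra.
Import Order.TTheory GRing.Theory Num.Theory.
Import numFieldNormedType.Exports.
Local Open Scope ring_scope.

Section Helpers.
Variable R : realType.
Notation V := 'rV[R]_4.

Lemma der_big (I : Type) (r : seq I) (P : pred I) (F : I -> V -> R) x v :
  (forall i, P i -> derivable (F i) x v) ->
  derivable (fun y => \sum_(i <- r | P i) F i y) x v.
Proof.
move=> dF; elim: r => [|a r IH].
  under eq_fun do rewrite big_nil. exact: derivable_cst.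
case Pa: (P a); under eq_fun do rewrite big_cons Pa.
  exact: derivableD (dF a Pa) IH.
exact: IH.
Qed.

Lemma der_bigM (I : Type) (r : seq I) (P : pred I) (F : I -> V -> R) x v :
  (forall i, P i -> derivable (F i) x v) ->
  derivable (fun y => \prod_(i <- r | P i) F i y) x v.
Proof.
move=> dF; elim: r => [|a r IH].
  under eq_fun do rewrite big_nil. exact: derivable_cst.
case Pa: (P a); under eq_fun do rewrite big_cons Pa.
  exact: derivableM (dF a Pa) IH.
exact: IH.
Qed.

Lemma der_det n (M : V -> 'M[R]_n) x v :
  (forall i j, derivable (fun y => M y i j) x v) ->
  derivable (fun y => \det (M y)) x v.
Proof.
move=> dM; apply: der_big => s _ /=.
apply: derivableM; first exact: derivable_cst.
by apply: der_bigM => i _; exact: dM.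
Qed.

Lemma der_adj n (M : V -> 'M[R]_n) x v :
  (forall i j, derivable (fun y => M y i j) x v) ->
  forall i j, derivable (fun y => \adj (M y) i j) x v.
Proof.
move=> dM i j; under eq_fun do rewrite mxE /cofactor.
have dd : derivable (fun y => \det (row' j (col' i (M y)))) x v.
  by apply: der_det => a b; under eq_fun do rewrite !mxE; exact: dM.
exact: (derivableM (derivable_cst ((-1) ^+ (j + i) : R) x v) dd).
Qed.

Lemma unit_lor (G : 'M[R]_4) : lorentzian_at G -> G \in unitmx.
Proof.
move=> [_ [P [uP eP]]].
have : \det (P^T *m G *m P) != 0.
  rewrite eP det_diag !big_ord_recr big_ord0 /= !mxE /=. 
  by rewrite !mul1r !mulr1 oppr_eq0 oner_eq0.
rewrite !det_mulmx unitmxE unitfE; apply: contraNneq => ->.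
by rewrite mulr0 mul0r.
Qed.


Lemma nearU (U : set V) x : open U -> U x -> \forall y \near x, U y.
Proof. by move=> oU Ux; apply: open_nbhs_nbhs. Qed.

Lemma der_ginv (U : set V) (g : V -> 'M[R]_4) x v :
  open U -> U x -> (forall y, U y -> g y \in unitmx) ->
  (forall i j, derivable (fun y => g y i j) x v) ->
  forall p q, derivable (fun y => ginv g y p q) x v.
Proof.
move=> oU Ux gu dg p q.
have h : derivable (fun y => (\det (g y))^-1 * \adj (g y) p q) x v.
  apply: derivableM; last exact: der_adj.
  apply: derivableV; last exact: der_det.
  by rewrite -unitfE -unitmxE gu.
apply: near_eq_derivable h.
near=> y.
rewrite /ginv /invmx gu ?mxE //.
near: y; exact: nearU.
Unshelve. all: by end_near. Qed.

Lemma der_tr (U : set V) (g K : V -> 'M[R]_4) x v :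
  open U -> U x -> (forall y, U y -> g y \in unitmx) ->
  (forall i j, derivable (fun y => g y i j) x v) ->
  (forall i j, derivable (fun y => K y i j) x v) ->
  derivable (gtrace g K) x v.
Proof.
move=> oU Ux gu dg dK; rewrite /gtrace.
apply: der_big => p _; apply: der_big => q _.
apply: derivableM; last exact: dK.
exact: (@der_ginv U g x v oU Ux gu dg p q).
Qed.


Lemma pd_near (U : set V) x (f h : V -> R) i : open U -> U x ->
  (forall y, U y -> f y = h y) -> pd i f x = pd i h x.
Proof.
move=> oU Ux fh; rewrite /pd; apply: near_eq_derive.
near=> y; apply: fh; near: y; exact: nearU.
Unshelve. all: by end_near. Qed.

Lemma ginv_sym (G : 'M[R]_4) : G^T = G -> forall i j, invmx G i j = invmx G j i.
Proof.
move=> gs i j; have e := trmx_inv G; rewrite gs in e.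
have := congr1 (fun M : 'M[R]_4 => M j i) e; rewrite /= mxE => ->.
by [].
Qed.

Lemma sum_delta (F : 'I_4 -> R) l : \sum_j F j * (1%:M : 'M[R]_4) j l = F l.
Proof.
rewrite (bigD1 l) //= big1 ?addr0 ?mxE ?eqxx ?mulr1 // => j /negbTE jl.
by rewrite mxE jl mulr0.
Qed.

Lemma inv_contr (G : 'M[R]_4) m l : G \in unitmx ->
  \sum_p invmx G m p * G p l = (1%:M : 'M[R]_4) m l.
Proof. by move=> gu; rewrite -(mulVmx gu) mxE. Qed.

Lemma chr_contr (G : 'M[R]_4) (A : 'I_4 -> R) l : G \in unitmx -> G^T = G ->
  \sum_p (2^-1 * \sum_m invmx G p m * A m) * G p l = 2^-1 * A l.
Proof.
move=> gu gs.
transitivity (2^-1 * \sum_m A m * \sum_p invmx G m p * G p l).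
  under eq_bigr do rewrite -mulrA mulr_suml.
  rewrite -mulr_sumr exchange_big /=; congr (_ * _).
  apply: eq_bigr => m _; rewrite mulr_sumr; apply: eq_bigr => p _.
  rewrite (@ginv_sym G gs m p); ring.
by under eq_bigr do rewrite inv_contr //; rewrite sum_delta.
Qed.

Lemma sum_lin (c a b : 'I_4 -> R) t :
  \sum_p c p * (a p - t * b p) = \sum_p c p * a p - t * \sum_p c p * b p.
Proof. by rewrite mulr_sumr -sumrB; apply: eq_bigr => p _; ring. Qed.

Lemma nabla2_lin (g K1 : V -> 'M[R]_4) (f : V -> R) (G : V -> 'M[R]_4) x (j k l : 'I_4) :
  derivable (fun y => K1 y k l) x (ebas R j) -> derivable f x (ebas R j) ->
  derivable (fun y => G y k l) x (ebas R j) ->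
  nabla2 g (fun y => K1 y - f y *: G y) x j k l =
  nabla2 g K1 x j k l - f x * nabla2 g G x j k l - pd j f x * G x k l.
Proof.
move=> d1 df dG; rewrite /nabla2.
have -> : pd j (fun y => (K1 y - f y *: G y) k l) x =
    pd j (fun y => K1 y k l) x - (f x * pd j (fun y => G y k l) x
    + G x k l * pd j f x).
  rewrite /pd; under eq_fun do rewrite !mxE.
  have E : (fun y => K1 y k l - f y * G y k l) =
    (fun y => K1 y k l) - (f * (fun y => G y k l)) by [].
  by rewrite E (deriveB d1 (derivableM df dG)) (deriveM df dG).
under eq_bigr do rewrite !mxE.
under [X in _ - _ - X]eq_bigr do rewrite !mxE.
rewrite !sum_lin; ring.
Qed.

Lemma metric_compat (g : V -> 'M[R]_4) x (j k l : 'I_4) : g x \in unitmx -> (g x)^T = g x ->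
  (forall m a b, pd m (fun y => g y a b) x = pd m (fun y => g y b a) x) ->
  nabla2 g g x j k l = 0.
Proof.
move=> gu gs ps; rewrite /nabla2 /christoffel /ginv.
have gsym a b : g x a b = g x b a by rewrite -{1}gs mxE.
under [X in _ - _ - X]eq_bigr do rewrite (gsym k).
rewrite !chr_contr //.
by rewrite (ps j l k) (ps k l j) (ps l k j); field.
Qed.

Lemma pd_div3 (F : V -> R) x m : derivable F x (ebas R m) ->
  pd m (fun y => F y / 3) x = pd m F x / 3.
Proof.
move=> dF; rewrite /pd.
rewrite (deriveM dF (derivable_cst (3^-1 : R) x (ebas R m))) derive_cst.
by rewrite /GRing.scale /=; ring.
Qed.

End Helpers.

Theorem mainTheorem9 (R : realType) (U : set 'rV[R]_4)
  (g : 'rV[R]_4 -> 'M[R]_4) (K : 'rV[R]_4 -> 'M[R]_4) :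
  open U ->
  (forall x, U x -> lorentzian_at (g x)) ->
  (forall x, U x -> forall i j : 'I_4,
     differentiable (fun y => g y i j) x) ->
  (forall x, U x -> forall i j k : 'I_4,
     differentiable (fun y => pd k (fun z => g z i j) y) x) ->
  (forall x, U x -> (K x)^T = K x) ->
  (forall x, U x -> forall i j : 'I_4,
     differentiable (fun y => K y i j) x) ->
  (forall x, U x -> forall j k l : 'I_4,
     nabla2 g K x j k l =
       5 / 18 * pd j (gtrace g K) x * g x k l
       - 1 / 18 * pd k (gtrace g K) x * g x j l
       - 1 / 18 * pd l (gtrace g K) x * g x j k) ->
  let C := fun y => K y - (gtrace g K y / 3) *: g y in
  (* (i) *)
  (forall x, U x -> forall l : 'I_4, gdiv g K x l = 0) /\
  (forall x, U x -> forall j k l : 'I_4,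
     nabla2 g K x j k l + nabla2 g K x l j k + nabla2 g K x k l j =
       6^-1 * (pd j (gtrace g K) x * g x k l + pd l (gtrace g K) x * g x j k
               + pd k (gtrace g K) x * g x l j)) /\
  (* (ii) *)
  (forall x, U x -> forall j k l : 'I_4,
     nabla2 g C x j k l = nabla2 g C x k j l) /\
  (forall x, U x -> K x = C x - gtrace g C x *: g x) /\
  (* consequence: both gravity forms *)
  (forall T : 'rV[R]_4 -> 'M[R]_4,
     (forall x, U x -> einstein g x = T x + K x) ->
     (forall x, U x -> einstein g x = T x + (C x - gtrace g C x *: g x))).
Proof.
move=> oU lor dg ddg Ks dK Hn C.
have gu y : U y -> g y \in unitmx by move=> Uy; exact: unit_lor (lor y Uy).
have gs y : U y -> (g y)^T = g y by move=> Uy; exact: (lor y Uy).1.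
have gsym y a b : U y -> g y a b = g y b a by move=> Uy; rewrite -{1}(gs y Uy) mxE.
have tr4 y : U y -> \sum_p \sum_q ginv g y p q * g y p q = 4.
  move=> Uy; transitivity (\sum_p (1%:M : 'M[R]_4) p p).
    apply: eq_bigr => p _; rewrite -(mulVmx (gu y Uy)) mxE.
    by apply: eq_bigr => q _; rewrite (gsym y p q Uy).
  rewrite !big_ord_recr big_ord0 !mxE /=; lra.
have dgd x : U x -> forall i j m, derivable (fun y => g y i j) x (ebas R m).
  by move=> Ux i j m; apply: diff_derivable; exact: dg.
have dKd x : U x -> forall i j m, derivable (fun y => K y i j) x (ebas R m).
  by move=> Ux i j m; apply: diff_derivable; exact: dK.
have dKt x : U x -> forall m, derivable (gtrace g K) x (ebas R m).
  by move=> Ux m; exact: (@der_tr R U g K x (ebas R m) oU Ux gu (fun i j => dgd x Ux i j m) (fun i j => dKd x Ux i j m)).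
have P4 : forall x, U x -> K x = C x - gtrace g C x *: g x.
  move=> x Ux.
  have trC : gtrace g C x = gtrace g K x - gtrace g K x / 3 * 4.
    rewrite /gtrace /C.
    under eq_bigr do under eq_bigr do rewrite !mxE.
    under eq_bigr do rewrite sum_lin.
    by rewrite sumrB -mulr_sumr tr4.
  apply/matrixP => i j; rewrite /C !mxE trC; by field.
split.
  move=> x Ux l; rewrite /gdiv.
  set a := fun j => pd j (gtrace g K) x.
  transitivity (\sum_j \sum_k (5/18 * a j * (ginv g x j k * g x k l)
     - 1/18 * a k * (ginv g x j k * g x j l)
     - 1/18 * a l * (ginv g x j k * g x j k))).
    by apply: eq_bigr => j _; apply: eq_bigr => k _; rewrite Hn // /a; ring.
  under eq_bigr do rewrite !sumrB.
  rewrite !sumrB.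
  have e1 : \sum_j \sum_k 5/18 * a j * (ginv g x j k * g x k l) = 5/18 * a l.
    transitivity (\sum_j 5/18 * a j * (1%:M : 'M[R]_4) j l).
      by apply: eq_bigr => j _; rewrite -mulr_sumr inv_contr // gu.
    by rewrite sum_delta.
  have e2 : \sum_j \sum_k 1/18 * a k * (ginv g x j k * g x j l) = 1/18 * a l.
    rewrite exchange_big /=.
    transitivity (\sum_k 1/18 * a k * (1%:M : 'M[R]_4) k l).
      apply: eq_bigr => k _; rewrite -mulr_sumr -(@inv_contr R (g x) k l (gu x Ux)).
      congr (_ * _); apply: eq_bigr => j _.
      by rewrite /ginv (@ginv_sym R (g x) (gs x Ux) j k).
    by rewrite sum_delta.
  have e3 : \sum_j \sum_k 1/18 * a l * (ginv g x j k * g x j k) = 1/18 * a l * 4.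
    by rewrite -(tr4 x Ux) mulr_sumr; apply: eq_bigr => j _; rewrite mulr_sumr.
  rewrite e1 e2 e3; by field.
split.
  move=> x Ux j k l; rewrite !Hn //.
  rewrite (gsym x j l Ux) (gsym x l k Ux) (gsym x k j Ux); by field.
have key : forall x, U x -> forall m n p : 'I_4, nabla2 g C x m n p =
    - (1/18) * (pd m (gtrace g K) x * g x n p + pd n (gtrace g K) x * g x m p
                + pd p (gtrace g K) x * g x m n).
  move=> x Ux m n p; rewrite /C.
  have d1 := dKd x Ux n p m.
  have d2 : derivable (fun y => gtrace g K y / 3) x (ebas R m).
    apply: derivableM; first exact: dKt.
    exact: derivable_cst.
  have d3 := dgd x Ux n p m.
  rewrite (@nabla2_lin R g K (fun y => gtrace g K y / 3) g x m n p d1 d2 d3).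
  have pds : forall m' a b, pd m' (fun y => g y a b) x = pd m' (fun y => g y b a) x.
    move=> m' a b; apply: (@pd_near R U x _ _ m' oU Ux) => y Uy; exact: gsym.
  rewrite (@metric_compat R g x m n p (gu x Ux) (gs x Ux) pds).
  rewrite (Hn x Ux) (@pd_div3 R _ x m (dKt x Ux m)).
  by field.
split.
  by move=> x Ux j k l; rewrite !key // (gsym x j l Ux) (gsym x k l Ux) (gsym x j k Ux); ring.
split; first exact: P4.
by move=> T hT y Uy; rewrite hT // -P4.
Qed.
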